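(* Let $A$ be an edge matrix over $\mathcal G$. Then $R_A=\overline{\operatorname{span}}\{\rho_i,\delta_i:i\in\mathcal G\}$ and $\mathfrak R_A=\operatorname{span}_{\mathbb Z}\{\rho_i,\delta_i:i\in\mathcal G\}$ (the additive group generated by the $\rho_i$ and $\delta_i$).
   Context: An edge matrix is a $0$-$1$ matrix $A$ whose index set $\mathcal G$ is the edge set of a directed graph, with $A(i,j)=1$ if the range of edge $i$ equals the source of edge $j$, and $A(i,j)=0$ otherwise. For $i\in\mathcal G$, $\rho_i(j)=A(i,j)$ is the $i$-th row of $A$ as a function on $\mathcal G$ and $\delta_i$ is the indicator function of $\{i\}$. $R_A$ is the $C^*$-subalgebra of $\ell^\infty(\mathcal G)$ generated by $\{\rho_i,\delta_i:i\in\mathcal G\}$, and $\mathfrak R_A$ is the subring of $\mathbb Z^{\mathcal G}$ generated by the same functions. *)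

(* Defs.v *)
From mathcomp Require Import all_boot all_order all_algebra.
From mathcomp Require Import complex reals.
Set Implicit Arguments. Unset Strict Implicit. Unset Printing Implicit Defensive.
Import Order.TTheory GRing.Theory Num.Theory.
Local Open Scope ring_scope.

Definition edge_matrix (V G : eqType) (src rng : G -> V) (i j : G) : bool :=
  rng i == src j.

Section Gens.
Variables (G : eqType) (K : pzRingType) (A : G -> G -> bool).

Definition rho (i : G) : G -> K := fun j => (A i j)%:R.
Definition delta (i : G) : G -> K := fun j => (i == j)%:R.
Definition gen (p : G + G) : G -> K :=
  match p with inl i => rho i | inr i => delta i end.
End Gens.

Section Cstar.
Variables (R : realType) (G : eqType).
Local Notation C := (R[i]).

Definition bounded (f : G -> C) : Prop := exists M : C, forall x, `|f x| <= M.

Definition is_Cstar_subalg (S : (G -> C) -> Prop) : Prop :=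
  (forall f, S f -> bounded f) /\
  S (fun _ => 0) /\
  (forall f g, S f -> S g -> S (fun x => f x + g x)) /\
  (forall (c : C) f, S f -> S (fun x => c * f x)) /\
  (forall f g, S f -> S g -> S (fun x => f x * g x)) /\
  (forall f, S f -> S (fun x => (f x)^*)) /\
  (forall f, bounded f ->
        (forall eps : C, 0 < eps -> exists g, S g /\ forall x, `|f x - g x| <= eps) ->
        S f).

Definition RA (A : G -> G -> bool) (f : G -> C) : Prop :=
  forall S, is_Cstar_subalg S -> (forall p, S (gen C A p)) -> S f.

Definition closed_span (A : G -> G -> bool) (f : G -> C) : Prop :=
  bounded f /\
  forall eps : C, 0 < eps -> exists s : seq (C * (G + G)),
    forall x, `|f x - \sum_(q <- s) q.1 * gen C A q.2 x| <= eps.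
End Cstar.

Section Zring.
Variable (G : eqType).

Definition is_subring (S : (G -> int) -> Prop) : Prop :=
  [/\ S (fun _ => 0),
      forall f g, S f -> S g -> S (fun x => f x - g x)
    & forall f g, S f -> S g -> S (fun x => f x * g x)].

Definition RingA (A : G -> G -> bool) (f : G -> int) : Prop :=
  forall S, is_subring S -> (forall p, S (gen int A p)) -> S f.

Definition Zspan (A : G -> G -> bool) (f : G -> int) : Prop :=
  exists s : seq (int * (G + G)),
    forall x, f x = \sum_(q <- s) q.1 * gen int A q.2 x.
End Zring.

(* Main.v *)
Require Import Defs.
From mathcomp Require Import all_boot all_order all_algebra.
From mathcomp Require Import complex reals ring.
From Stdlib Require Import FunctionalExtensionality.
Set Implicit Arguments. Unset Strict Implicit.
Local Open Scope ring_scope.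
Import Order.TTheory GRing.Theory Num.Theory.

Section Alg.
Variables (V G : eqType) (src rng : G -> V).
Local Notation A := (edge_matrix src rng).

Definition mulb (p q : G + G) : bool :=
  match p, q with
  | inl i, inl j => rng i == rng j
  | inl i, inr j => rng i == src j
  | inr i, inl j => rng j == src i
  | inr i, inr j => i == j
  end.
Definition mulg (p q : G + G) : G + G :=
  match p, q with
  | inl i, inl j => inl i
  | inl i, inr j => inr j
  | inr i, _ => inr i
  end.

Lemma gen_mul (K : pzRingType) p q x :
  gen K A p x * gen K A q x = (mulb p q)%:R * gen K A (mulg p q) x.
Proof.
case: p => i; case: q => j; rewrite /= /rho /delta /edge_matrix.
- case: (rng i =P src x) => E1; case: (rng j =P src x) => E2;
  case: (rng i =P rng j) => E3 /=; rewrite ?mulr1 ?mulr0 ?mul0r ?mul1r //; congruence.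
- case: (rng i =P src x) => E1; case: (j =P x) => E2;
  case: (rng i =P src j) => E3 /=; rewrite ?mulr1 ?mulr0 ?mul0r ?mul1r //; subst; congruence.
- case: (i =P x) => E1; case: (rng j =P src x) => E2;
  case: (rng j =P src i) => E3 /=; rewrite ?mulr1 ?mulr0 ?mul0r ?mul1r //; subst; congruence.
- case: (i =P x) => E1; case: (j =P x) => E2;
  case: (i =P j) => E3 /=; rewrite ?mulr1 ?mulr0 ?mul0r ?mul1r //; subst; congruence.
Qed.

Definition spanf (K : pzRingType) (s : seq (K * (G + G))) x :=
  \sum_(q <- s) q.1 * gen K A q.2 x.

Definition mulseq (K : pzRingType) (s t : seq (K * (G + G))) :=
  map (fun u : (K * (G + G)) * (K * (G + G)) =>
         (u.1.1 * u.2.1 * (mulb u.1.2 u.2.2)%:R, mulg u.1.2 u.2.2))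
      [seq (q, r) | q <- s, r <- t].

Lemma spanf_mul (K : comPzRingType) (s t : seq (K * (G+G))) x :
  spanf s x * spanf t x = spanf (mulseq s t) x.
Proof.
rewrite /spanf /mulseq big_map big_allpairs mulr_suml.
apply: eq_bigr => q _; rewrite mulr_sumr; apply: eq_bigr => r _ /=.
have := gen_mul K q.2 r.2 x => E.
transitivity (q.1 * r.1 * (gen K A q.2 x * gen K A r.2 x)); first by ring.
by rewrite E; ring.
Qed.

Lemma spanf_cat (K : pzRingType) (s t : seq (K * (G+G))) x :
  spanf (s ++ t) x = spanf s x + spanf t x.
Proof. by rewrite /spanf big_cat. Qed.

Lemma spanf_scale (K : pzRingType) (c : K) (s : seq (K * (G+G))) x :
  spanf [seq (c * q.1, q.2) | q <- s] x = c * spanf s x.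
Proof. by rewrite /spanf big_map mulr_sumr; apply: eq_bigr => q _ /=; rewrite mulrA. Qed.

Lemma spanf_gen (K : pzRingType) p x : spanf [:: (1 : K, p)] x = gen K A p x.
Proof. by rewrite /spanf big_seq1 mul1r. Qed.

Lemma spanf_nil (K : pzRingType) x : spanf (@nil (K * (G+G))) x = 0.
Proof. by rewrite /spanf big_nil. Qed.

Lemma Zspan_subring : is_subring (Zspan A).
Proof.
split.
- by exists [::] => x; rewrite big_nil.
- move=> f g [s Hs] [t Ht]; exists (s ++ [seq (-1 * q.1, q.2) | q <- t]) => x.
  rewrite Hs Ht; change (spanf s x - spanf t x = spanf (s ++ [seq (-1 * q.1, q.2) | q <- t]) x).
  by rewrite spanf_cat spanf_scale mulN1r.
- move=> f g [s Hs] [t Ht]; exists (mulseq s t) => x.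
  rewrite Hs Ht; change (spanf s x * spanf t x = spanf (mulseq s t) x).
  by rewrite spanf_mul.
Qed.

Lemma subring_scale S (h : G -> int) (z : int) :
  is_subring S -> S h -> S (fun x => z * h x).
Proof.
move=> [S0 SB SM] Sh.
have SN : forall f, S f -> S (fun x => - f x).
  move=> f Sf; have := SB _ _ S0 Sf.
  by have -> : (fun x => 0 - f x) = (fun x => - f x) by apply: functional_extensionality => x; rewrite sub0r.
have SD : forall f g, S f -> S g -> S (fun x => f x + g x).
  move=> f g Sf Sg; have := SB _ _ Sf (SN _ Sg).
  by have -> : (fun x => f x - - g x) = (fun x => f x + g x) by apply: functional_extensionality => x; rewrite opprK.
have SP : forall n : nat, S (fun x => n%:Z * h x).
  elim=> [|n IH].
    by have -> : (fun x => 0%:Z * h x) = (fun _ => 0) by apply: functional_extensionality => x; rewrite mul0r.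
  have -> : (fun x => n.+1%:Z * h x) = (fun x => h x + n%:Z * h x).
    by apply: functional_extensionality => x; rewrite intS mulrDl mul1r.
  exact: SD.
case: z => n; first exact: SP.
have -> : (fun x => Negz n * h x) = (fun x => - (n.+1%:Z * h x)).
  by apply: functional_extensionality => x; rewrite NegzE mulNr.
exact: SN.
Qed.

Lemma Zpart f : RingA A f <-> Zspan A f.
Proof.
split.
- move=> H; apply: H; first exact: Zspan_subring.
  move=> p; exists [:: (1, p)] => x; change (gen int A p x = spanf [:: (1, p)] x).
  by rewrite spanf_gen.
- move=> [s Hs] S HS Hg.
  have -> : f = spanf s by apply: functional_extensionality => x; rewrite Hs.
  case: HS => [S0 SB SM].
  have SN : forall f, S f -> S (fun x => - f x).
    move=> g Sg; have := SB _ _ S0 Sg.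
    by have -> : (fun x => 0 - g x) = (fun x => - g x) by apply: functional_extensionality => x; rewrite sub0r.
  have SD : forall f g, S f -> S g -> S (fun x => f x + g x).
    move=> g h Sg Sh; have := SB _ _ Sg (SN _ Sh).
    by have -> : (fun x => g x - - h x) = (fun x => g x + h x) by apply: functional_extensionality => x; rewrite opprK.
  elim: s {Hs} => [|q s IH].
    by have -> : spanf (@nil (int * (G+G))) = (fun _ => 0) by apply: functional_extensionality => x; rewrite spanf_nil.
  have -> : spanf (q :: s) = (fun x => q.1 * gen int A q.2 x + spanf s x).
    by apply: functional_extensionality => x; rewrite /spanf big_cons.
  apply: SD => //; apply: subring_scale => //; by split.
Qed.
End Alg.

Section Ana.
Variables (R : realType) (V G : eqType) (src rng : G -> V).
Local Notation C := (R[i]).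
Local Notation A := (edge_matrix src rng).
Local Notation spanC := (@spanf V G src rng C).

Lemma gen_norm p x : `|gen C A p x| <= 1.
Proof. by case: p => i /=; rewrite /rho /delta /edge_matrix; [case: (rng i == src x)|case: (i == x)]; rewrite ?normr0 ?normr1. Qed.

Lemma gen_conj p x : (gen C A p x)^* = gen C A p x.
Proof. by case: p => i /=; rewrite /rho /delta conjC_nat. Qed.

Lemma spanf_norm (s : seq (C * (G + G))) x : `|spanC s x| <= \sum_(q <- s) `|q.1|.
Proof.
rewrite /spanf; apply: le_trans (ler_norm_sum _ _ _) _; apply: ler_sum => q _.
by rewrite normrM; apply: ler_piMr => //; apply: gen_norm.
Qed.

Lemma spanf_conj (s : seq (C * (G + G))) x :
  (spanC s x)^* = spanC [seq (q.1^*, q.2) | q <- s] x.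
Proof.
rewrite /spanf big_map rmorph_sum; apply: eq_bigr => q _ /=.
by rewrite rmorphM; congr (_ * _); apply: gen_conj.
Qed.

Lemma bounded_nn (f : G -> C) : bounded f -> exists M : C, 0 <= M /\ forall x, `|f x| <= M.
Proof.
move=> [M HM]; exists `|M|; split; first exact: normr_ge0.
move=> x.
have h := HM x; have M0 : 0 <= M := le_trans (normr_ge0 _) h.
by rewrite (ger0_norm M0).
Qed.

Lemma half_gt0 (e : C) : 0 < e -> 0 < e / 2.
Proof. by move=> he; rewrite divr_gt0 // ltr0n. Qed.

Lemma div1_gt0 (e a : C) : 0 < e -> 0 <= a -> 0 < e / (a + 1).
Proof. by move=> he ha; rewrite divr_gt0 // ltr_wpDl. Qed.

Lemma mul_div1 (e a : C) : 0 < e -> 0 <= a -> a * (e / (a + 1)) <= e.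
Proof.
move=> he ha; have h1 : 0 < a + 1 by rewrite ltr_wpDl.
apply: le_trans (_ : (a + 1) * (e / (a + 1)) <= e).
  by apply: ler_wpM2r; [apply/ltW/div1_gt0|rewrite lerDl].
by rewrite mulrC divfK // gt_eqF.
Qed.

Lemma CS_intro (f : G -> C) : bounded f ->
  (forall eps : C, 0 < eps -> exists s, forall x, `|f x - spanC s x| <= eps) ->
  closed_span A f.
Proof. by move=> hb ha; split. Qed.

Lemma CS_elim (f : G -> C) : closed_span A f ->
  forall eps : C, 0 < eps -> exists s, forall x, `|f x - spanC s x| <= eps.
Proof. by case. Qed.

Lemma CS_bounded (f : G -> C) : closed_span A f -> bounded f.
Proof. by case. Qed.

Lemma CS_Cstar : is_Cstar_subalg (@closed_span R G A).
Proof.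
split; first exact: CS_bounded.
split.
  apply: CS_intro; first by exists 0 => x; rewrite normr0.
  by move=> e he; exists [::] => x; rewrite spanf_nil subr0 normr0 ltW.
split.
  move=> f g Hf Hg; apply: CS_intro.
    have [M [M0 HM]] := bounded_nn (CS_bounded Hf).
    have [N [N0 HN]] := bounded_nn (CS_bounded Hg).
    by exists (M + N) => x; apply: le_trans (ler_normD _ _) (lerD (HM x) (HN x)).
  move=> e he.
  have [s Hs] := CS_elim Hf (half_gt0 he).
  have [t Ht] := CS_elim Hg (half_gt0 he).
  exists (s ++ t) => x; rewrite spanf_cat.
  have -> : f x + g x - (spanC s x + spanC t x) = (f x - spanC s x) + (g x - spanC t x) by ring.
  by rewrite [e]splitr; apply: le_trans (ler_normD _ _) (lerD (Hs x) (Ht x)).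
split.
  move=> c f Hf; apply: CS_intro.
    have [M [M0 HM]] := bounded_nn (CS_bounded Hf).
    by exists (`|c| * M) => x; rewrite normrM; apply: ler_wpM2l.
  move=> e he.
  have [s Hs] := CS_elim Hf (div1_gt0 he (normr_ge0 c)).
  exists [seq (c * q.1, q.2) | q <- s] => x; rewrite spanf_scale -mulrBr normrM.
  apply: le_trans (mul_div1 he (normr_ge0 c)).
  by apply: ler_wpM2l.
split.
  move=> f g Hf Hg; apply: CS_intro.
    have [M [M0 HM]] := bounded_nn (CS_bounded Hf).
    have [N [N0 HN]] := bounded_nn (CS_bounded Hg).
    by exists (M * N) => x; rewrite normrM; apply: ler_pM.
  move=> e he.
  have [M [M0 HM]] := bounded_nn (CS_bounded Hf).
  have [t Ht] := CS_elim Hg (div1_gt0 (half_gt0 he) M0).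
  set T : C := \sum_(q <- t) `|q.1|.
  have T0 : 0 <= T by apply: sumr_ge0 => q _.
  have [s Hs] := CS_elim Hf (div1_gt0 (half_gt0 he) T0).
  exists (mulseq src rng s t) => x; rewrite -spanf_mul.
  have -> : f x * g x - spanC s x * spanC t x =
    f x * (g x - spanC t x) + (f x - spanC s x) * spanC t x by ring.
  rewrite [e]splitr; apply: le_trans (ler_normD _ _) _; apply: lerD; rewrite normrM.
    apply: le_trans (mul_div1 (half_gt0 he) M0).
    by apply: ler_pM => //; apply: Ht.
  rewrite mulrC; apply: le_trans (mul_div1 (half_gt0 he) T0).
  by apply: ler_pM => //; apply: spanf_norm.
split.
  move=> f Hf; apply: CS_intro.
    have [M [M0 HM]] := bounded_nn (CS_bounded Hf).
    by exists M => x; rewrite norm_conjC.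
  move=> e he; have [s Hs] := CS_elim Hf he.
  exists [seq (q.1^*, q.2) | q <- s] => x.
  by rewrite -spanf_conj -rmorphB norm_conjC.
move=> f hb ha; apply: CS_intro => // e he.
have [g [Hg Hfg]] := ha _ (half_gt0 he).
have [s Hs] := CS_elim Hg (half_gt0 he).
exists s => x.
have -> : f x - spanC s x = (f x - g x) + (g x - spanC s x) by ring.
by rewrite [e]splitr; apply: le_trans (ler_normD _ _) (lerD (Hfg x) (Hs x)).
Qed.

Lemma Cpart (f : G -> C) : RA A f <-> closed_span A f.
Proof.
split.
- move=> H; apply: H; first exact: CS_Cstar.
  move=> p; apply: CS_intro.
    by exists 1 => x; apply: gen_norm.
  by move=> e he; exists [:: (1, p)] => x; rewrite spanf_gen subrr normr0 ltW.
- move=> Hf S HS Hg.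
  have HS' := HS.
  case: HS' => [Sb [S0 [SD [SZ [SM [Sc Scl]]]]]].
  have Sspan : forall s, S (spanC s).
    elim=> [|q s IH].
      by have -> : spanC [::] = (fun _ => 0) by apply: functional_extensionality => x; rewrite spanf_nil.
    have -> : spanC (q :: s) = (fun x => q.1 * gen C A q.2 x + spanC s x).
      by apply: functional_extensionality => x; rewrite /spanf big_cons.
    by apply: SD => //; apply: SZ.
  apply: Scl; first exact: CS_bounded Hf.
  move=> e he; have [s Hs] := CS_elim Hf he.
  by exists (spanC s); split.
Qed.
End Ana.

Theorem proposition5p1 (R : realType) (V G : eqType) (src rng : G -> V) :
  let A := edge_matrix src rng in
  (forall f : G -> R[i], RA A f <-> closed_span A f) /\
  (forall f : G -> int, RingA A f <-> Zspan A f).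
Proof.
move=> A; split => f; [exact: Cpart | exact: Zpart].
Qed.
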